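(* Let $M$ be a matroid on a finite set $E$ with $r(M)>0$. Then $M$ is a unique expansion matroid if and only if $M$ is a unique partition matroid, i.e. there exists a partition $P$ of the set $\cup P\subseteq E$ such that $\mathcal{I}(M)=\{X\subseteq \cup P: |X\cap D|\le 1\text{ for all } D\in P\}$.
   Context: For a matroid $M=(E,\mathcal{I})$: $\mathcal{I}(M)$ is its family of independent sets, $\mathcal{B}(M)$ its bases, $r(M)$ the size of a base. For $r(M)>0$, $s(M)=\{A\in\mathcal{I}(M): |A|=r(M)-1\}$. $M$ is a unique expansion matroid if for every $B\in\mathcal{B}(M)$ and every $A\in s(M)$, whenever $e_1,e_2\in B$ satisfy $A\cup\{e_1\}\in\mathcal{B}(M)$ and $A\cup\{e_2\}\in\mathcal{B}(M)$, then $e_1=e_2$. For a set family $S$, $\cup S=\bigcup_{X\in S}X$; a partition of a set $U$ is a family of nonempty pairwise disjoint subsets of $U$ with union $U$. *)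

(* Defs.v *)
From mathcomp Require Import all_boot.
Set Implicit Arguments. Unset Strict Implicit. Unset Printing Implicit Defensive.

Definition is_matroid (T : finType) (E : {set T}) (I : {set {set T}}) : Prop :=
  [/\ (forall X : {set T}, X \in I -> X \subset E),
      set0 \in I,
      (forall X Y : {set T}, Y \in I -> X \subset Y -> X \in I) &
      (forall X Y : {set T}, X \in I -> Y \in I -> #|X| < #|Y| ->
         exists2 e, e \in Y :\: X & e |: X \in I)].

Definition mrank (T : finType) (I : {set {set T}}) : nat :=
  \max_(X in I) #|X|.

(* bases: the maximal independent sets (equivalently those of size r(M)) *)
Definition bases (T : finType) (I : {set {set T}}) : {set {set T}} :=
  [set B in I | #|B| == mrank I].

Definition sfam (T : finType) (I : {set {set T}}) : {set {set T}} :=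
  [set A in I | #|A| == (mrank I).-1].

Definition unique_expansion (T : finType) (I : {set {set T}}) : Prop :=
  forall (B A : {set T}) (e1 e2 : T), B \in bases I -> A \in sfam I ->
    e1 \in B -> e2 \in B ->
    e1 |: A \in bases I -> e2 |: A \in bases I -> e1 = e2.

Definition unique_partition (T : finType) (E : {set T}) (I : {set {set T}})
  : Prop :=
  exists P : {set {set T}},
    [/\ partition P (cover P), cover P \subset E &
        I = [set X : {set T} | (X \subset cover P) &&
                               [forall D in P, #|X :&: D| <= 1]]].

(* Main.v *)
Require Import Defs.
From mathcomp Require Import all_boot zify.
Set Implicit Arguments. Unset Strict Implicit. Unset Printing Implicit Defensive.

Lemma mrank_ge (T : finType) (I : {set {set T}}) (X : {set T}) : X \in I -> #|X| <= mrank I.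
Proof. move=> XI; rewrite /mrank; exact: (leq_bigmax_cond (F:=fun X : {set T} => #|X|)). Qed.

Lemma mrank_ex (T : finType) (I : {set {set T}}) : set0 \in I -> exists2 B, B \in I & #|B| = mrank I.
Proof.
move=> h0; have hc : 0 < #|I| by rewrite card_gt0; apply/set0Pn; exists set0.
case: (eq_bigmax_cond (fun X : {set T} => #|X|) hc) => B BI e.
by exists B => //; rewrite /mrank e.
Qed.

Lemma extend (T : finType) (E : {set T}) (I : {set {set T}}) : is_matroid E I ->
  forall (S B : {set T}), B \in I -> #|B| = mrank I -> B \subset S ->
  forall k (Y : {set T}), mrank I - #|Y| = k -> Y \in I -> Y \subset S ->
  exists B', [/\ B' \in I, #|B'| = mrank I, Y \subset B' & B' \subset S].
Proof.
move=> [_ _ _ aug] S B BI Bc BS k; elim: k => [|k IH] Y Yk YI YS.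
  exists Y; split => //; have := mrank_ge YI; lia.
have hlt : #|Y| < #|B| by lia.
have [e /setDP [eB eY] eYI] := aug Y B YI BI hlt.
have Ec : #|e |: Y| = #|Y|.+1 by rewrite cardsU1 eY.
have [B' [h1 h2 h3 h4]] := IH (e |: Y) ltac:(lia) eYI
  ltac:(by rewrite subUset sub1set (subsetP BS) // YS).
exists B'; split => //; apply: subset_trans h3; exact: subsetUr.
Qed.

Lemma local_ind (T : finType) (E : {set T}) (I : {set {set T}}) :
  is_matroid E I -> unique_expansion I -> forall X : {set T},
  (forall Y : {set T}, Y \subset X -> #|Y| <= 2 -> Y \in I) -> X \in I.
Proof.
move=> HM UE X; have [n] := ubnP #|X|; elim: n X => // n IH X Hn HX.
have [_ h0 down aug] := HM.
case: (leqP #|X| 2) => h2; first by apply: HX.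
have sub : forall x, x \in X -> X :\ x \in I.
  move=> x xX; apply: IH.
    by move: Hn; rewrite (cardsD1 x X) xX; lia.
  by move=> Y YX; apply: HX; apply: subset_trans YX (subsetDl _ _).
case: (boolP (X \in I)) => // XnI; exfalso.
have [c1 c1X] : exists c1, c1 \in X by apply/set0Pn; rewrite -card_gt0; lia.
have [c2 c2X1] : exists c2, c2 \in X :\ c1.
  by apply/set0Pn; rewrite -card_gt0; move: h2; rewrite (cardsD1 c1 X) c1X; lia.
have [c3 c3X2] : exists c3, c3 \in X :\ c1 :\ c2.
  apply/set0Pn; rewrite -card_gt0; move: h2; rewrite (cardsD1 c1 X) c1X.
  rewrite (cardsD1 c2 (X :\ c1)) c2X1; lia.
move: c2X1 c3X2; rewrite !inE => /andP [c21 c2X] /andP [c32 /andP [c31 c3X]].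
have indep_sub : forall S : {set T}, X \subset S -> S \in I -> False.
  by move=> S XS SI; move/negP: XnI; apply; exact: down SI XS.
have [B0 B0I B0c] := mrank_ex h0.
have [B [BI Bc XB _]] := extend HM B0I B0c (subsetT B0) (erefl _) (sub c1 c1X) (subsetT _).
have c1B : c1 \notin B.
  apply/negP => c1B; apply: (indep_sub B) => //.
  by rewrite -(setD1K c1X) subUset sub1set c1B XB.
have c2B : c2 \in B by apply: (subsetP XB); rewrite !inE c21.
have c3B : c3 \in B by apply: (subsetP XB); rewrite !inE c31.
have BS : B \subset c1 |: B by exact: subsetUr.
have Xc2S : X :\ c2 \subset c1 |: B.
  apply/subsetP => x; rewrite !inE => /andP [xc2 xX].
  case: eqP => //= xc1; apply: (subsetP XB); rewrite !inE xX andbT; exact/eqP.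
have Xc3S : X :\ c3 \subset c1 |: B.
  apply/subsetP => x; rewrite !inE => /andP [xc2 xX].
  case: eqP => //= xc1; apply: (subsetP XB); rewrite !inE xX andbT; exact/eqP.
have [B2 [B2I B2c XB2 B2S]] := extend HM BI Bc BS (erefl _) (sub c2 c2X) Xc2S.
have [B3 [B3I B3c XB3 B3S]] := extend HM BI Bc BS (erefl _) (sub c3 c3X) Xc3S.
have c2B2 : c2 \notin B2.
  apply/negP => h; apply: (indep_sub B2) => //.
  by rewrite -(setD1K c2X) subUset sub1set h XB2.
have c3B3 : c3 \notin B3.
  apply/negP => h; apply: (indep_sub B3) => //.
  by rewrite -(setD1K c3X) subUset sub1set h XB3.
have c3B2 : c3 \in B2 by apply: (subsetP XB2); rewrite !inE c32.
have cU : #|c1 |: B| = (mrank I).+1 by rewrite cardsU1 c1B Bc.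
have B3e : B3 = (c1 |: B) :\ c3.
  apply/eqP; rewrite eqEcard; apply/andP; split.
    apply/subsetP => x xB3; rewrite in_setD1 (subsetP B3S) // andbT.
    by apply/eqP => e; move: c3B3; rewrite -e xB3.
  by move: cU; rewrite (cardsD1 c3 (c1 |: B)) in_setU1 c3B orbT B3c add1n => -[->].
set A := B2 :\ c3.
have AI : A \in I by apply: down B2I _; exact: subsetDl.
have Ac : #|A| = (mrank I).-1 by move: B2c; rewrite (cardsD1 c3 B2) c3B2 add1n => <-.
have rpos : 0 < mrank I by move: B2c; rewrite (cardsD1 c3 B2) c3B2 add1n => <-.
have c2A : c2 \notin A by rewrite !inE negb_and c2B2 orbT.
have H3 : c3 |: A \in bases I by rewrite setD1K // /bases inE B2I B2c eqxx.
have H2 : c2 |: A \in bases I.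
  rewrite /bases inE; apply/andP; split.
    apply: down B3I _; rewrite B3e; apply/subsetP => x; rewrite !inE.
    case/orP => [/eqP -> | /andP [xc3 xB2]]; first by rewrite eq_sym c32 c2B orbT.
    by rewrite xc3 /= -in_setU1 (subsetP B2S).
  by rewrite cardsU1 c2A Ac add1n prednK.
have HB : B \in bases I by rewrite /bases inE BI Bc eqxx.
have HA : A \in sfam I by rewrite /sfam inE AI Ac eqxx.
by move: c32; rewrite (UE B A c3 c2 HB HA c3B c2B H3 H2) eqxx.
Qed.

Lemma dir_back (T : finType) (E : {set T}) (I : {set {set T}}) :
  0 < mrank I -> unique_partition E I -> unique_expansion I.
Proof.
move=> rpos [P [hP _ HI]] B A e1 e2 HB HA e1B e2B H1 H2.
move: HB HA H1 H2; rewrite /bases /sfam !inE => /andP [BI /eqP Bc] /andP [AI /eqP Ac]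
  /andP [I1 /eqP c1] /andP [I2 /eqP c2].
have e1A : e1 \notin A.
  apply/negP => h; move: c1; rewrite (setUidPr _) ?sub1set // Ac => e.
  by move: rpos e; case: (mrank I) => // n _; apply: n_Sn.
have e2A : e2 \notin A.
  apply/negP => h; move: c2; rewrite (setUidPr _) ?sub1set // Ac => e.
  by move: rpos e; case: (mrank I) => // n _; apply: n_Sn.
have SI : e1 |: (e2 |: A) \in I.
  move: BI AI I1 I2; rewrite HI !inE => /andP [BS BD] /andP [AS _] /andP [_ D1] /andP [_ D2].
  apply/andP; split.
    by rewrite !subUset !sub1set !(subsetP BS) ?AS.
  apply/forallP => D; apply/implyP => DP.
  move: (forallP BD D) (forallP D1 D) (forallP D2 D); rewrite DP /=.
  move=> /card_le1_eqP hB /card_le1_eqP h1 /card_le1_eqP h2.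
  apply/card_le1_eqP => x y; rewrite !inE => /andP [xS xD] /andP [yS yD].
  have g1 : forall u v, u \in e1 |: A -> v \in e1 |: A -> u \in D -> v \in D -> u = v.
    by move=> u v uA vA uD vD; apply: h1; rewrite inE ?uA ?vA ?uD ?vD.
  have g2 : forall u v, u \in e2 |: A -> v \in e2 |: A -> u \in D -> v \in D -> u = v.
    by move=> u v uA vA uD vD; apply: h2; rewrite inE ?uA ?vA ?uD ?vD.
  have gB : forall u v, u \in B -> v \in B -> u \in D -> v \in D -> u = v.
    by move=> u v uA vA uD vD; apply: hB; rewrite inE ?uA ?vA ?uD ?vD.
  case/orP: xS => [/eqP xe | /orP [/eqP xe | xA]];
  case/orP: yS => [/eqP ye | /orP [/eqP ye | yA]]; subst.
  all: try by []. all: try by apply: gB.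
  all: try by apply: g1 => //; try (apply/setU1P; (by left) || (by right)).
  all: try by apply: g2 => //; try (apply/setU1P; (by left) || (by right)).
case: (eqVneq e1 e2) => // ne; exfalso.
have := mrank_ge SI.
rewrite cardsU1 cardsU1 !inE negb_or ne e1A e2A Ac /=.
by move: rpos; case: (mrank I) => // n _; rewrite add1n add1n /= ltnn.
Qed.

Theorem theorem7 (T : finType) (E : {set T}) (I : {set {set T}}) :
  is_matroid E I -> 0 < mrank I ->
  (unique_expansion I <-> unique_partition E I).
Proof.
move=> HM rpos; split; last exact: dir_back.
move=> UE; have [IE h0 down aug] := HM.
set NL := [set a | [set a] \in I].
set q := fun a b : T => (a == b) || ([set a; b] \notin I).
have qsym : forall a b, q a b = q b a.
  by move=> a b; rewrite /q eq_sym setUC.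
have qtrans : forall a b c, b \in NL -> q a b -> q b c -> q a c.
  move=> a b c; rewrite inE => bN.
  rewrite /q => /orP [/eqP -> //| abI] /orP [/eqP <- //| bcI].
  case: (boolP (a == c)) => //= ac; apply/negP => acI.
  have [e] := aug [set b] [set a; c] bN acI ltac:(by rewrite cards1 cards2 ac).
  rewrite !inE => /andP [eb /orP [] /eqP ->] eI.
    by move/negP: abI.
  by move/negP: bcI; apply; rewrite setUC.
have qeq : {in NL & &, equivalence_rel q}.
  move=> x y z xN yN zN; split; first by rewrite /q eqxx.
  move=> qxy; apply/idP/idP => h.
    by apply: (@qtrans y x z xN); rewrite // qsym.
  exact: (@qtrans x y z yN qxy h).
set P := equivalence_partition q NL.
have hP : partition P NL by apply: equivalence_partitionP.
have cP : cover P = NL := cover_partition hP.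
exists P; split.
- by rewrite cP.
- rewrite cP; apply/subsetP => a; rewrite inE => aI.
  by rewrite -sub1set; apply: IE.
apply/setP => X; rewrite inE cP; apply/idP/idP.
  move=> XI; apply/andP; split.
    apply/subsetP => x xX; rewrite inE; apply: down XI _; by rewrite sub1set.
  apply/forallP => D; apply/implyP => /imsetP [a aN ->].
  apply/card_le1_eqP => x y; rewrite !inE => /andP [xX /andP [xN qax]] /andP [yX /andP [yN qay]].
  have : q x y by apply: (@qtrans x a y aN); rewrite // qsym.
  rewrite /q => /orP [/eqP -> //|]; rewrite -[_ \notin _]/(~~ _) => /negP []; apply: down XI _.
  by rewrite subUset !sub1set xX yX.
case/andP => XN /forallP XD.
apply: (local_ind HM UE) => Y YX.
rewrite leq_eqVlt ltnS leq_eqVlt ltnS leqn0 => /orP [/cards2P [x [y [xy Ye]]] | /orP [/cards1P [x Ye] | /eqP/cards0_eq ->]] //; subst Y.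
- apply/negPn/negP => xyI.
  have xX : x \in X by apply: (subsetP YX); rewrite !inE eqxx.
  have yX : y \in X by apply: (subsetP YX); rewrite !inE eqxx orbT.
  have xN : x \in NL := subsetP XN x xX.
  have yN : y \in NL := subsetP XN y yX.
  have DP : [set z in NL | q x z] \in P by apply: imset_f.
  have := XD [set z in NL | q x z]; rewrite DP /= => /card_le1_eqP h.
  move: xN yN; rewrite !inE => xN yN.
  move/eqP: xy; apply; apply: h; rewrite !inE ?xX ?yX ?xN ?yN /=.
    by apply/orP; right.
  by rewrite /q eqxx.
- have xX : x \in X by apply: (subsetP YX); rewrite !inE eqxx.
  by have := subsetP XN x xX; rewrite inE.
Qed.
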